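(* Let $G=(V_L,V_R,E)$ be a bipartite graph in which every vertex of $V_L$ has degree at most $\Delta_L$ and every vertex of $V_R$ has degree at least $2$. Let $M\subseteq V_R$ be such that every $v\in V_L$ has exactly one neighbour in $M$. Then for every $u\in V_L$ and $k\ge1$, the number of connected induced subgraphs $G'$ of $G$ such that (1) $u\in V(G')$, (2) $|V(G')\cap V_R|=k$, (3) $\Gamma_G(v)\subseteq V(G')$ for every $v\in V(G')\cap V_R$, and (4) every $v\in V(G')\cap V_L$ has exactly one neighbour in $V(G')\cap M$ and exactly one neighbour in $V(G')\cap(V_R\setminus M)$, is at most $(\Delta_L-1)^{k-1}$.
   Context: $\Gamma_G(v)$ denotes the set of neighbours of $v$ in $G$. *)

(* Defs.v *)
From mathcomp Require Import all_boot.
Set Implicit Arguments. Unset Strict Implicit. Unset Printing Implicit Defensive.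

(* A finite bipartite graph G = (V_L, V_R, E) is given by finite types L, R
   and an adjacency relation adj : L -> R -> bool.  Its vertex type is L + R. *)

Section Bip.
Variables (L R : finType) (adj : L -> R -> bool).

Definition bip_edge (x y : L + R) : bool :=
  match x, y with
  | inl a, inr b => adj a b
  | inr b, inl a => adj a b
  | _, _ => false
  end.

Definition nbhdL (a : L) : {set R} := [set b | adj a b].
Definition nbhdR (b : R) : {set L} := [set a | adj a b].

Definition induced_connected (S : {set L + R}) : bool :=
  [forall x in S, forall y in S,
    connect (fun a b => [&& a \in S, b \in S & bip_edge a b]) x y].

Definition partL (S : {set L + R}) : {set L} := [set a | inl a \in S].
Definition partR (S : {set L + R}) : {set R} := [set b | inr b \in S].

End Bip.

(* Main.v *)
From Stdlib Require Import Classical.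
Require Import Defs.
From mathcomp Require Import all_boot.
Set Implicit Arguments. Unset Strict Implicit. Unset Printing Implicit Defensive.

Definition valid (L R : finType) (adj : L -> R -> bool) (M : {set R}) (u : L) (k : nat)
  (S : {set L + R}) : bool :=
      [&& induced_connected adj S,
          inl u \in S,
          #|partR S| == k,
          [forall b in partR S, nbhdR adj b \subset partL S] &
          [forall a in partL S,
             (#|nbhdL adj a :&: (partR S :&: M)| == 1) &&
             (#|nbhdL adj a :&: (partR S :\: M)| == 1)]].

Lemma card_bigcup_le (T I : finType) (A : {pred I}) (F : I -> {set T}) :
  #|\bigcup_(i in A) F i| <= \sum_(i in A) #|F i|.
Proof.
elim/big_rec2: _ => [|i U s _ Hs]; first by rewrite cards0.
apply: leq_trans (leq_card_setU _ _).1 _.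
by rewrite leq_add2l.
Qed.

Lemma card1_eq (T : finType) (A : {set T}) x y :
  #|A| = 1 -> x \in A -> y \in A -> x = y.
Proof.
move/eqP/cards1P=> [z ->]; by rewrite !inE => /eqP -> /eqP ->.
Qed.

Lemma memL (L R : finType) (adj : L -> R -> bool) (M : {set R}) u k S a :
  valid adj M u k S -> (inl a \in S) = [exists b, (inr b \in S) && adj a b].
Proof.
case/and5P=> _ _ _ H4 H5; apply/idP/existsP.
- move=> Ha; have := forallP H5 a; rewrite inE Ha /= => /andP[/eqP c1 _].
  move/eqP/cards1P: c1 => [x Hx].
  have : x \in [set x] by rewrite set11.
  rewrite -Hx !inE => /andP[ax /andP[xS _]]; exists x; by rewrite xS.
- case=> b /andP[bS ab]; have := forallP H4 b; rewrite inE bS /= => /subsetP sub.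
  by have := sub a; rewrite !inE => /(_ ab).
Qed.

Lemma valid_inj (L R : finType) (adj : L -> R -> bool) (M : {set R}) u k S1 S2 :
  valid adj M u k S1 -> valid adj M u k S2 -> partR S1 = partR S2 -> S1 = S2.
Proof.
move=> V1 V2 E; apply/setP=> [[a|b]].
- rewrite (memL a V1) (memL a V2); apply: eq_existsb => b.
  by have := congr1 (fun X : {set R} => b \in X) E; rewrite !inE => ->.
- by have := congr1 (fun X : {set R} => b \in X) E; rewrite !inE.
Qed.

Lemma card_fixR (L R : finType) (adj : L -> R -> bool) (M : {set R}) u k D :
  #|[set S | valid adj M u k S & partR S == D]| <= 1.
Proof.
apply/card_le1_eqP=> S1 S2; rewrite !inE => /andP[V1 /eqP E1] /andP[V2 /eqP E2].
by have := valid_inj V1 V2; rewrite E1 E2 => /(_ erefl) ->.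
Qed.

From mathcomp Require Import zify.

Lemma key (L R : finType) (adj : L -> R -> bool) (DeltaL : nat)
  (degL : forall a : L, #|nbhdL adj a| <= DeltaL)
  (M : {set R})
  (HM : forall a : L, #|nbhdL adj a :&: M| = 1)
  (u : L) (k : nat) (hD : 2 <= DeltaL) :
  forall n (D : {set R}), D != set0 -> k - #|D| = n ->
  #|[set S | valid adj M u k S & D \subset partR S]| <= (DeltaL - 1) ^ n.
Proof.
have hD1 : 0 < DeltaL - 1 by rewrite subn_gt0.
elim=> [|n IH] D D0 Hn.
  have kD : k <= #|D| by rewrite -subn_eq0 Hn.
  apply: leq_trans (card_fixR adj M u k D).
  apply: subset_leq_card; apply/subsetP=> S; rewrite inE => /andP[V sub].
  rewrite inE V /= eq_sym eqEcard sub /=.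
  by case/and5P: V => _ _ /eqP -> _ _.
have kD : #|D| < k by rewrite -subn_gt0 Hn.
case: (classic (exists b a m, [/\ b \in D, b \notin M, adj a b & [/\ m \in M, adj a m & m \notin D]])).
  case=> b [a [m [bD bM ab [mM am mD]]]].
  have sub : [set S | valid adj M u k S & D \subset partR S] \subset
             [set S | valid adj M u k S & (m |: D) \subset partR S].
    apply/subsetP=> S; rewrite inE => /andP[V DS]; rewrite inE V /= subUset DS andbT sub1set.
    have aS : inl a \in S.
      rewrite (memL a V); apply/existsP; exists b; rewrite ab andbT.
      by have := subsetP DS b bD; rewrite inE.
    case/and5P: V => _ _ _ _ H5; have := forallP H5 a; rewrite inE aS /= => /andP[/eqP c1 _].
    move/eqP/cards1P: (c1) => [x Hx]; have : x \in [set x] by rewrite set11.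
    rewrite -Hx !inE => /andP[ax /andP[xS xM]].
    have -> : m = x by apply: (card1_eq (HM a)); rewrite !inE ?ax ?am ?xM ?mM.
    exact: xS.
  apply: leq_trans (subset_leq_card sub) _.
  apply: leq_trans (IH (m |: D) _ _) _.
  - by apply/set0Pn; exists m; exact: setU11.
  - by rewrite cardsU1 mD add1n subnS Hn.
  - by rewrite expnS leq_pmull.
move=> Hnf.
case: (classic (exists m a, [/\ m \in D, m \in M, adj a m & forall d, d \in D -> d \notin M -> ~~ adj a d])).
  case=> m [a [mD mM am Hd]].
  pose F c := [set S | valid adj M u k S & (c |: D) \subset partR S].
  have sub : [set S | valid adj M u k S & D \subset partR S] \subset
             \bigcup_(c in nbhdL adj a :\: M) F c.
    apply/subsetP=> S; rewrite inE => /andP[V DS].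
    have aS : inl a \in S.
      rewrite (memL a V); apply/existsP; exists m; rewrite am andbT.
      by have := subsetP DS m mD; rewrite inE.
    case/and5P: (V) => _ _ _ _ H5; have := forallP H5 a; rewrite inE aS /= => /andP[_ /eqP c2].
    move/eqP/cards1P: (c2) => [x Hx]; have : x \in [set x] by rewrite set11.
    rewrite -Hx !inE => /andP[ax /andP[xM xS]].
    apply/bigcupP; exists x; first by rewrite !inE ax xM.
    by rewrite inE V /= subUset sub1set inE xS DS.
  have Hc : forall c, c \in nbhdL adj a :\: M -> #|F c| <= (DeltaL - 1) ^ n.
    move=> c; rewrite !inE => /andP[cM ac]; apply: IH.
      by apply/set0Pn; exists c; exact: setU11.
    have cD : c \notin D by apply/negP => cD; have := Hd c cD cM; rewrite ac.
    by rewrite cardsU1 cD add1n subnS Hn.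
  apply: leq_trans (subset_leq_card sub) _.
  apply: leq_trans (card_bigcup_le _ _) _.
  apply: (@leq_trans (\sum_(i in nbhdL adj a :\: M) (DeltaL - 1) ^ n)); first exact: leq_sum.
  rewrite sum_nat_const expnS; apply: leq_mul => //.
  have := cardsID M (nbhdL adj a); rewrite HM => E.
  have := degL a; rewrite -E; lia.
move=> Hnc.
apply: leq_trans (_ : _ <= #|[set S | valid adj M u k S & partR S == D]|) _; last first.
  by apply: leq_trans (card_fixR _ _ _ _ D) _; rewrite expn_gt0 hD1.
apply: subset_leq_card; apply/subsetP=> S; rewrite inE => /andP[V DS].
rewrite inE V /= eq_sym eqEcard DS /=.
suff PS : partR S \subset D by rewrite subset_leq_card.
apply/subsetP=> t; rewrite inE => tS.
case/set0Pn: D0 => d0 d0D.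
case/and5P: (V) => Hc _ _ H4 H5.
have d0S : inr d0 \in S by have := subsetP DS d0 d0D; rewrite inE.
move/forallP: Hc => /(_ (inr d0)) /implyP /(_ d0S) /forallP /(_ (inr t)) /implyP /(_ tS) Hconn.
pose X := [pred x : L + R | match x with inr d => d \in D | inl a => [exists d in D, adj a d] end].
pose e := (fun a b => [&& a \in S, b \in S & bip_edge adj a b]).
have esym : forall x y, e x y -> e y x.
  by move=> [a|b] [a'|b'] /and3P[xS yS exy]; rewrite /e xS yS.
have fwd : forall x y, e x y -> x \in X -> y \in X.
  move=> [a|b] [a'|b'] /and3P[xS yS] //= exy; rewrite !inE /=.
    case/existsP=> d /andP[dD ad].
    have := forallP H5 a; rewrite inE xS /= => /andP[/eqP c1 /eqP c2].
    have dS : inr d \in S by have := subsetP DS d dD; rewrite inE.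
    case: (boolP (b' \in M)) => b'M.
      case: (boolP (d \in M)) => dM.
        have -> : b' = d by apply: (card1_eq (HM a)); rewrite !inE ?exy ?ad ?dM ?b'M.
        exact: dD.
      apply/negPn/negP => b'D; apply: Hnf; exists d, a, b'; split => //; split.
    have [d' [d'D d'M ad']] : exists d', [/\ d' \in D, d' \notin M & adj a d'].
      case: (boolP (d \in M)) => dM; last by exists d.
      apply: NNPP => H; apply: Hnc; exists d, a; split => // d' d'D d'M.
      by apply/negP => ad'; apply: H; exists d'.
    have d'S : inr d' \in S by have := subsetP DS d' d'D; rewrite inE.
    have -> : b' = d' by apply: (card1_eq c2); rewrite !inE ?exy ?ad' ?d'M ?b'M ?yS ?d'S.
    exact: d'D.
  by move=> bD; apply/existsP; exists b; rewrite bD exy.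
have cl : closed e X.
  move=> x y exy; apply/idP/idP; [exact: fwd | exact: fwd (esym _ _ exy)].
have := closed_connect cl Hconn.
by rewrite !inE /= d0D => <-.
Qed.

Theorem mainTheorem16 (L R : finType) (adj : L -> R -> bool) (DeltaL : nat)
  (degL : forall a : L, #|nbhdL adj a| <= DeltaL)
  (degR : forall b : R, 2 <= #|nbhdR adj b|)
  (M : {set R})
  (HM : forall a : L, #|nbhdL adj a :&: M| = 1)
  (u : L) (k : nat) (hk : 1 <= k) :
  #|[set S : {set L + R} |
      [&& induced_connected adj S,
          inl u \in S,
          #|partR S| == k,
          [forall b in partR S, nbhdR adj b \subset partL S] &
          [forall a in partL S,
             (#|nbhdL adj a :&: (partR S :&: M)| == 1) &&
             (#|nbhdL adj a :&: (partR S :\: M)| == 1)]]]|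
  <= (DeltaL - 1) ^ (k - 1).
Proof.
case: (leqP 2 DeltaL) => hD; last first.
  apply: (@leq_trans 0) => //; rewrite leqn0 cards_eq0; apply/eqP/setP => S; rewrite [RHS]inE [LHS]inE.
  apply/negbTE/negP => V0.
  have V : valid adj M u k S := V0.
  case/and5P: (V) => _ uS _ _ H5; have := forallP H5 u.
  rewrite inE uS /= => /andP[/eqP c1 /eqP c2].
  move/eqP/cards1P: c1 => [x Hx]; have : x \in [set x] by rewrite set11.
  rewrite -Hx !inE => /andP[ax /andP[_ xM]].
  move/eqP/cards1P: c2 => [y Hy]; have : y \in [set y] by rewrite set11.
  rewrite -Hy !inE => /andP[ay /andP[yM _]].
  have xy : x != y by apply/eqP => E; move: xM; rewrite E (negbTE yM).
  have : #|[set x; y]| <= #|nbhdL adj u|.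
    by apply: subset_leq_card; apply/subsetP=> z; rewrite !inE => /orP[/eqP->|/eqP->].
  rewrite cards2 xy => H2; have := degL u; lia.
move/eqP/cards1P: (HM u) => [m0 Hm0].
apply: (@leq_trans #|[set S | valid adj M u k S & [set m0] \subset partR S]|).
  apply: subset_leq_card; apply/subsetP => S; move=> V0.
  have V : valid adj M u k S by move: V0; rewrite inE.
  rewrite inE V /= sub1set.
  case/and5P: (V) => _ uS _ _ H5; have := forallP H5 u.
  rewrite inE uS /= => /andP[/eqP c1 _].
  move/eqP/cards1P: c1 => [x Hx]; have : x \in [set x] by rewrite set11.
  rewrite -Hx !inE => /andP[ax /andP[xS xM]].
  have : x \in nbhdL adj u :&: M by rewrite !inE ax xM.
  by rewrite Hm0 !inE => /eqP <-.
apply: key => //.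
  by apply/set0Pn; exists m0; rewrite set11.
by rewrite cards1.
Qed.
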